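(* Let $\gamma=(\alpha,\beta)\in\mathbb N_0^{2n}$ with $\alpha\ge\beta$, let $\sigma\in\{+,-\}$ with $\alpha>\beta$ if $\sigma=-$, and let $\tilde\gamma=(\tilde\alpha,\tilde\alpha)\in\mathbb N_0^{2n}$. Let $z_\sigma^{(\ell)}$ be the Commutator Chain of Type I generated by $g_\sigma^\gamma$ and $g_+^{\tilde\gamma}$. Assume there is an index $k$ with $\alpha_k\neq\beta_k$ and $\tilde\alpha_k\neq0$. Then for every $\ell\ge0$, $z_\sigma^{(\ell)}\neq0$ and $$\deg(z_\sigma^{(\ell)})=2\ell(|\tilde\alpha|-1)+|\alpha|+|\beta| .$$
   Context: Fix $n\ge 1$. The Weyl algebra $A_n$ is the unital associative $\mathbb{C}$-algebra generated by $a_1,\dots,a_n,a_1^\dagger,\dots,a_n^\dagger$ subject to $[a_i,a_j^\dagger]=\delta_{ij}$ and $[a_i,a_j]=[a_i^\dagger,a_j^\dagger]=0$. For $\gamma=(\alpha,\beta)\in\mathbb N_0^{2n}$ set $a^{\gamma}=(a_1^\dagger)^{\alpha_1}\cdots(a_n^\dagger)^{\alpha_n}a_1^{\beta_1}\cdots a_n^{\beta_n}$; these form a $\mathbb C$-basis; $|\alpha|=\sum_j\alpha_j$, $|\gamma|=|\alpha|+|\beta|$. For $0\neq g\in A_n$, $\deg(g)$ is the largest $|\gamma|$ with $a^\gamma$ having nonzero coefficient in $g$; $\deg(0)=-\infty$. $\dagger$ is the conjugate-linear anti-automorphism with $(a_j)^\dagger=a_j^\dagger$, $(a_j^\dagger)^\dagger=a_j$.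 $\hat A_n=\{g\in A_n:g^\dagger=-g\}$; $g_+^\gamma=i((a^\gamma)^\dagger+a^\gamma)$, $g_-^\gamma=(a^\gamma)^\dagger-a^\gamma$. The order on $\mathbb N_0^n$ is lexicographic. Commutator Chain of Type I generated by $g_\sigma^\gamma$ and $g_+^{\tilde\gamma}$ (with $\tilde\gamma=(\tilde\alpha,\tilde\alpha)$): $z_\sigma^{(0)}=g_\sigma^\gamma$ and $z_\sigma^{(\ell+1)}=[g_+^{\tilde\gamma},z_\sigma^{(\ell)}]$ for $\ell\ge0$. *)

(* Defs.v *)
From HB Require Import structures.
From mathcomp Require Import all_boot all_order all_algebra all_field.
From mathcomp Require Import mpoly.
Set Implicit Arguments. Unset Strict Implicit. Unset Printing Implicit Defensive.
Import Order.TTheory GRing.Theory Num.Theory.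
Local Open Scope ring_scope.

(* An element is stored through its
   coordinates in the normal-ordered basis a^gamma, gamma = (alpha,beta):
   we use the vector space {mpoly algC[n + n]}, the monomial 'X_[m] standing
   for a^gamma with alpha_j = m (lshift n j) (exponent of a_j^dagger) and
   beta_j = m (rshift n j) (exponent of a_j).  Only the linear structure of
   mpoly is used; the Weyl product is [wmul] below. *)
Definition weyl (n : nat) := {mpoly algC[n + n]}.

Section Weyl.
Variable n : nat.

Definition alpha_of (m : 'X_{1..n + n}) : 'X_{1..n} :=
  [multinom m (lshift n j) | j < n].
Definition beta_of (m : 'X_{1..n + n}) : 'X_{1..n} :=
  [multinom m (rshift n j) | j < n].

Definition mkgamma (a b : 'X_{1..n}) : 'X_{1..n + n} :=
  [multinom match split i with inl j => a j | inr j => b j end | i < n + n].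

Definition amono (a b : 'X_{1..n}) : weyl n := 'X_[mkgamma a b].

(* Left multiplication by the generators on normal-ordered expressions:
     a_j^dag * a^(alpha,beta) = a^(alpha + e_j, beta)
     a_j     * a^(alpha,beta) = a^(alpha, beta + e_j) + alpha_j a^(alpha - e_j, beta)
   (the latter is exactly the relation a_j a_j^dag = a_j^dag a_j + 1). *)
Definition lmul_cre (j : 'I_n) (p : weyl n) : weyl n := 'X_[U_(lshift n j)] * p.
Definition lmul_ann (j : 'I_n) (p : weyl n) : weyl n :=
  'X_[U_(rshift n j)] * p + mderiv (lshift n j) p.

Definition lmul_mono (m : 'X_{1..n + n}) (p : weyl n) : weyl n :=
  foldr (fun j q => iter (m (lshift n j)) (lmul_cre j) q)
    (foldr (fun j q => iter (m (rshift n j)) (lmul_ann j) q) p (enum 'I_n))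
    (enum 'I_n).

Definition wmul (p q : weyl n) : weyl n :=
  \sum_(m <- msupp p) p@_m *: lmul_mono m q.

Definition wcomm (p q : weyl n) : weyl n := wmul p q - wmul q p.

(* dagger: conjugate-linear anti-automorphism with a_j <-> a_j^dag;
   on the basis ((a^dag)^alpha a^beta)^dag = (a^dag)^beta a^alpha. *)
Definition swapm (m : 'X_{1..n + n}) : 'X_{1..n + n} :=
  mkgamma (beta_of m) (alpha_of m).
Definition dagger (p : weyl n) : weyl n :=
  \sum_(m <- msupp p) (p@_m)^* *: 'X_[swapm m].

(* deg(g) = largest |gamma| in the support (meaningful for g <> 0) *)
Definition wdeg (p : weyl n) : nat := (msize p).-1.

Inductive sign := SPlus | SMinus.

Definition gsig (s : sign) (a b : 'X_{1..n}) : weyl n :=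
  match s with
  | SPlus => 'i *: (dagger (amono a b) + amono a b)
  | SMinus => dagger (amono a b) - amono a b
  end.

Fixpoint zchain (s : sign) (a b at_ : 'X_{1..n}) (l : nat) : weyl n :=
  match l with
  | 0 => gsig s a b
  | l'.+1 => wcomm (gsig SPlus at_ at_) (zchain s a b at_ l')
  end.

Definition lex_lt (a b : 'X_{1..n}) : Prop :=
  exists i : 'I_n, (forall j : 'I_n, (j < i)%N -> a j = b j) /\ (a i < b i)%N.
Definition lex_le (a b : 'X_{1..n}) : Prop := a = b \/ lex_lt a b.

End Weyl.

(* Main.v *)
Require Import Defs.
From HB Require Import structures.
From mathcomp Require Import all_boot all_order all_algebra all_field.
From mathcomp Require Import mpoly ring zify.
Set Implicit Arguments. Unset Strict Implicit. Unset Printing Implicit Defensive.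
Import Order.TTheory GRing.Theory Num.Theory.
Local Open Scope ring_scope.
Arguments mderiv : simpl never.

Section S.
Variable n : nat.
Local Notation W := (weyl n).
Local Notation lx j := (lshift n j).
Local Notation ry j := (rshift n j).
Implicit Types a b : 'X_{1..n}.

Definition dle2 (p : W) (k d : nat) :=
  forall m : 'X_{1..n+n}, m \in msupp p -> (mdeg m + k <= d)%N.

Lemma dle2_0 k d : dle2 0 k d.
Proof. by move=> m; rewrite mcoeff_msupp mcoeff0 eqxx. Qed.

Lemma dle2D p q k d : dle2 p k d -> dle2 q k d -> dle2 (p + q) k d.
Proof. by move=> hp hq m /msuppD_le; rewrite mem_cat => /orP[/hp|/hq]. Qed.

Lemma dle2N p k d : dle2 p k d -> dle2 (- p) k d.
Proof. by move=> hp m; rewrite (perm_mem (msuppN p)) => /hp. Qed.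

Lemma dle2B p q k d : dle2 p k d -> dle2 q k d -> dle2 (p - q) k d.
Proof. by move=> hp hq; apply: dle2D => //; apply: dle2N. Qed.

Lemma dle2Z c p k d : dle2 p k d -> dle2 (c *: p) k d.
Proof. by move=> hp m /msuppZ_le /hp. Qed.

Lemma dle2_sum (I : Type) (r : seq I) (P : pred I) (F : I -> W) k d :
  (forall i, P i -> dle2 (F i) k d) -> dle2 (\sum_(i <- r | P i) F i) k d.
Proof.
move=> h; elim/big_rec: _ => [|i x Pi hx]; first exact: dle2_0.
by apply: dle2D => //; apply: h.
Qed.

Lemma dle2_mono p k d k' d' : (d + k' <= d' + k)%N -> dle2 p k d -> dle2 p k' d'.
Proof. by move=> h hp m /hp; lia. Qed.

Lemma dle2M p q k1 d1 k2 d2 : dle2 p k1 d1 -> dle2 q k2 d2 ->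
  dle2 (p * q) (k1 + k2) (d1 + d2).
Proof.
move=> hp hq m /msuppM_le /allpairsP [[m1 m2] /= [h1 h2 ->]].
by rewrite mdegD; have := hp _ h1; have := hq _ h2; lia.
Qed.

Lemma dle2_deriv i p k d : dle2 p k d -> dle2 (mderiv i p) k.+1 d.
Proof.
move=> hp m; rewrite mcoeff_msupp mcoeff_mderiv => h.
have : (m + U_(i))%MM \in msupp p.
  by rewrite mcoeff_msupp; apply: contraNneq h => ->; rewrite mul0rn.
by move/hp; rewrite mdegD mdeg1; lia.
Qed.

Lemma dle2X m : dle2 'X_[m] 0 (mdeg m).
Proof. by move=> m'; rewrite msuppX inE => /eqP ->; rewrite addn0. Qed.

Definition hom (p : W) d := forall m : 'X_{1..n+n}, m \in msupp p -> mdeg m = d.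

Lemma hom0 d : hom 0 d.
Proof. by move=> m; rewrite mcoeff_msupp mcoeff0 eqxx. Qed.
Lemma homD p q d : hom p d -> hom q d -> hom (p + q) d.
Proof. by move=> hp hq m /msuppD_le; rewrite mem_cat => /orP[/hp|/hq]. Qed.
Lemma homZ c p d : hom p d -> hom (c *: p) d.
Proof. by move=> hp m /msuppZ_le /hp. Qed.
Lemma hom_sum (I : Type) (r : seq I) (P : pred I) (F : I -> W) d :
  (forall i, P i -> hom (F i) d) -> hom (\sum_(i <- r | P i) F i) d.
Proof.
move=> h; elim/big_rec: _ => [|i x Pi hx]; first exact: hom0.
by apply: homD => //; apply: h.
Qed.
Lemma homM p q d1 d2 : hom p d1 -> hom q d2 -> hom (p * q) (d1 + d2).
Proof.
move=> hp hq m /msuppM_le /allpairsP [[m1 m2] /= [h1 h2 ->]].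
by rewrite mdegD (hp _ h1) (hq _ h2).
Qed.
Lemma homX m : hom 'X_[m] (mdeg m).
Proof. by move=> m'; rewrite msuppX inE => /eqP ->. Qed.
Lemma hom_dle p d : hom p d -> dle2 p 0 d.
Proof. by move=> h m /h ->; rewrite addn0. Qed.

Lemma mderivXi (i j : 'I_(n + n)) : mderiv j ('X_i : W) = (i == j)%:R.
Proof.
rewrite mderivX mnm1E; case: eqP => [->|_]; last by rewrite scale0r.
have -> : (U_(j) - U_(j))%MM = 0%MM by apply/mnmP => k; rewrite mnmBE subnn mnm0E.
by rewrite mpolyX0 scale1r.
Qed.

Lemma split_l (j : 'I_n) : split (lx j) = inl j.
Proof. by rewrite -[lx j]/(unsplit (inl j)) unsplitK. Qed.
Lemma split_r (j : 'I_n) : split (ry j) = inr j.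
Proof. by rewrite -[ry j]/(unsplit (inr j)) unsplitK. Qed.

Lemma mkgL a b j : mkgamma a b (lx j) = a j.
Proof. by rewrite mnmE split_l. Qed.
Lemma mkgR a b j : mkgamma a b (ry j) = b j.
Proof. by rewrite mnmE split_r. Qed.

Lemma mdeg_mkg a b : mdeg (mkgamma a b) = (mdeg a + mdeg b)%N.
Proof.
rewrite !mdegE big_split_ord /=.
by congr (_ + _)%N; apply: eq_bigr => j _; rewrite ?mkgL ?mkgR.
Qed.

Lemma alpha_mkg a b : alpha_of (mkgamma a b) = a.
Proof. by apply/mnmP => j; rewrite mnmE mkgL. Qed.
Lemma beta_mkg a b : beta_of (mkgamma a b) = b.
Proof. by apply/mnmP => j; rewrite mnmE mkgR. Qed.

Lemma daggerX a b : dagger (amono a b) = amono b a.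
Proof.
rewrite /dagger /amono msuppX big_seq1 mcoeffX eqxx conjC1 scale1r.
by rewrite /swapm alpha_mkg beta_mkg.
Qed.


Definition S1 (p q : W) : W :=
  p * q + \sum_(j < n) mderiv (ry j) p * mderiv (lx j) q.

Definition Inv (q : W) dq (T : W) (w : 'X_{1..n+n}) :=
  dle2 (T - S1 'X_[w] q) 4 (mdeg w + dq).

Definition zlx (w : 'X_{1..n+n}) := forall j, w (lx j) = 0%N.

Lemma mderiv_sum i (I : Type) (r : seq I) (P : pred I) (F : I -> W) :
  mderiv i (\sum_(j <- r | P j) F j) = \sum_(j <- r | P j) mderiv i (F j).
Proof. exact: raddf_sum. Qed.

Lemma sum_delta (F : 'I_n -> W) i :
  \sum_(j < n) ((ry i == ry j)%:R * F j) = F i.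
Proof.
rewrite (bigD1 i) //= eqxx mul1r big1 ?addr0 // => j ji.
by rewrite eq_shift eq_sym (negbTE ji) mul0r.
Qed.

Lemma ann_step q dq T w i : dle2 q 0 dq -> zlx w -> Inv q dq T w ->
  Inv q dq (lmul_ann i T) (U_(ry i) + w)%MM.
Proof.
move=> hq hw; rewrite /Inv.
set R := T - _ => hR.
have eT : T = S1 'X_[w] q + R by rewrite /R addrC subrK.
have d0 : mderiv (lx i) ('X_[w] : W) = 0 by rewrite mderivX hw scale0r.
have hs : \sum_(j < n) mderiv (ry j) ('X_(ry i) * 'X_[w]) * mderiv (lx j) q
   = 'X_[w] * mderiv (lx i) q +
     'X_(ry i) * \sum_(j < n) (mderiv (ry j) 'X_[w] * mderiv (lx j) q).
  rewrite (eq_bigr (fun j => (ry i == ry j)%:R * ('X_[w] * mderiv (lx j) q) +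
     'X_(ry i) * (mderiv (ry j) 'X_[w] * mderiv (lx j) q))); last first.
    by move=> j _; rewrite mderivM mderivXi mulrDl !mulrA.
  rewrite big_split /=; congr (_ + _); [exact: (sum_delta (fun j => 'X_[w] * mderiv (lx j) q)) | by rewrite mulr_sumr].
have hd : mderiv (lx i) (\sum_(j < n) mderiv (ry j) ('X_[w] : W) * mderiv (lx j) q)
   = \sum_(j < n) mderiv (ry j) 'X_[w] * mderiv (lx j) (mderiv (lx i) q).
  rewrite mderiv_sum; apply: eq_bigr => j _.
  by rewrite mderivM mderiv_comm d0 mderiv0 mul0r add0r mderiv_comm.
have -> : lmul_ann i T - S1 'X_[(U_(ry i) + w)%MM] q =
  'X_(ry i) * R + mderiv (lx i) R +
  \sum_(j < n) mderiv (ry j) 'X_[w] * mderiv (lx j) (mderiv (lx i) q).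
  rewrite /lmul_ann /S1 mpolyXD hs eT /S1 !mderivD mderivM d0 hd.
  ring.
rewrite mdegD mdeg1.
apply: dle2D; first apply: dle2D.
- apply: (dle2_mono _ (dle2M (dle2X (m:=U_(ry i)%MM)) hR)); rewrite mdeg1; lia.
- apply: (dle2_mono _ (dle2_deriv hR)); lia.
- apply: dle2_sum => j _.
  apply: (dle2_mono _ (dle2M (dle2_deriv (dle2X (m:=w))) (dle2_deriv (dle2_deriv hq)))).
  lia.
Qed.

Lemma cre_step q dq T w i : Inv q dq T w ->
  Inv q dq (lmul_cre i T) (U_(lx i) + w)%MM.
Proof.
rewrite /Inv; set R := T - _ => hR.
have eT : T = S1 'X_[w] q + R by rewrite /R addrC subrK.
have -> : lmul_cre i T - S1 'X_[(U_(lx i) + w)%MM] q = 'X_(lx i) * R.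
  rewrite /lmul_cre /S1 mpolyXD eT /S1.
  have -> : \sum_(j < n) mderiv (ry j) ('X_(lx i) * 'X_[w]) * mderiv (lx j) q
     = 'X_(lx i) * \sum_(j < n) (mderiv (ry j) 'X_[w] * mderiv (lx j) q).
    rewrite mulr_sumr; apply: eq_bigr => j _.
    by rewrite mderivM mderivXi eq_lrshift mul0r add0r mulrA.
  ring.
rewrite mdegD mdeg1.
by apply: (dle2_mono _ (dle2M (dle2X (m:=U_(lx i)%MM)) hR)); rewrite mdeg1; lia.
Qed.


Lemma ann_iter q dq j k T w : dle2 q 0 dq -> zlx w -> Inv q dq T w ->
  Inv q dq (iter k (lmul_ann j) T) (iter k (fun w => U_(ry j) + w)%MM w) /\
  zlx (iter k (fun w => U_(ry j) + w)%MM w).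
Proof.
move=> hq hw hT; elim: k => [|k [ih1 ih2]] //=; split.
  exact: ann_step.
by move=> i; rewrite mnmDE mnm1E eq_shift ih2.
Qed.

Lemma ann_fold q dq (c : 'I_n -> nat) s T w : dle2 q 0 dq -> zlx w -> Inv q dq T w ->
  Inv q dq (foldr (fun j q => iter (c j) (lmul_ann j) q) T s)
           (foldr (fun j w => iter (c j) (fun w => U_(ry j) + w)%MM w) w s) /\
  zlx (foldr (fun j w => iter (c j) (fun w => U_(ry j) + w)%MM w) w s).
Proof.
move=> hq hw hT; elim: s => [|j s [ih1 ih2]] //=.
exact: ann_iter.
Qed.

Lemma cre_fold q dq (c : 'I_n -> nat) s T w : Inv q dq T w ->
  Inv q dq (foldr (fun j q => iter (c j) (lmul_cre j) q) T s)
           (foldr (fun j w => iter (c j) (fun w => U_(lx j) + w)%MM w) w s).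
Proof.
move=> hT; elim: s => [|j s ih] //=.
elim: (c j) => [|k ihk] //=; exact: cre_step.
Qed.

Lemma iter_addE (u w : 'X_{1..n+n}) k :
  iter k (fun w => u + w)%MM w = (u *+ k + w)%MM.
Proof.
elim: k => [|k ih] /=; apply/mnmP => i.
  by rewrite mnmDE mulmnE muln0.
by rewrite ih !mnmDE !mulmnE mulnS addnA.
Qed.

Lemma fold_addE (f : 'I_n -> 'I_(n+n)) (c : 'I_n -> nat) s w i :
  (foldr (fun j w => iter (c j) (fun w => U_(f j) + w)%MM w) w s) i =
  (\sum_(j <- s) ((f j == i) * c j) + w i)%N.
Proof.
elim: s => [|j s ih] /=; first by rewrite big_nil.
by rewrite iter_addE mnmDE ih mulmnE mnm1E big_cons addnA.
Qed.

Lemma S1_0 q : S1 1 q = q.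
Proof.
rewrite /S1 mul1r big1 ?addr0 // => j _.
by rewrite -mpolyC1 mderivC mul0r.
Qed.

Lemma lmul_monoE q dq m : dle2 q 0 dq ->
  dle2 (lmul_mono m q - S1 'X_[m] q) 4 (mdeg m + dq).
Proof.
move=> hq.
have h0 : Inv q dq q 0%MM.
  by rewrite /Inv mpolyX0 S1_0 subrr; exact: dle2_0.
have hz : zlx 0%MM by move=> j; rewrite mnm0E.
have [hA _] := @ann_fold q dq (fun j => m (ry j)) (enum 'I_n) q 0%MM hq hz h0.
have hC := @cre_fold q dq (fun j => m (lx j)) (enum 'I_n) _ _ hA.
have e : (foldr (fun j w => iter (m (lx j)) (fun w => U_(lx j) + w)%MM w)
      (foldr (fun j w => iter (m (ry j)) (fun w => U_(ry j) + w)%MM w) 0%MM (enum 'I_n))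
      (enum 'I_n)) = m; last by rewrite /Inv e in hC; exact hC.
apply/mnmP => i; rewrite !fold_addE mnm0E addn0 !big_enum /=.
case: (splitP i) => j hj.
  have -> : i = lx j by apply: val_inj.
  rewrite (bigD1 j) //= eqxx mul1n big1; last by move=> k kj; rewrite eq_shift (negbTE kj).
  rewrite big1; last by move=> k _; rewrite eq_shift.
  by rewrite !addn0.
have -> : i = ry j by apply: val_inj.
rewrite big1; last by move=> k _; rewrite eq_shift.
rewrite (bigD1 j) //= eqxx mul1n big1; last by move=> k kj; rewrite eq_shift (negbTE kj).
by rewrite !addn0.
Qed.


Lemma S1D p1 p2 q : S1 (p1 + p2) q = S1 p1 q + S1 p2 q.
Proof.
rewrite /S1 mulrDl.
under eq_bigr => j _ do rewrite mderivD mulrDl.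
rewrite big_split /=; ring.
Qed.

Lemma S1Z c p q : S1 (c *: p) q = c *: S1 p q.
Proof.
rewrite /S1 scalerDr -scalerAl scaler_sumr; congr (_ + _).
by apply: eq_bigr => j _; rewrite mderivZ scalerAl.
Qed.

Lemma S10 q : S1 0 q = 0.
Proof. by rewrite /S1 mul0r big1 ?addr0 // => j _; rewrite mderiv0 mul0r. Qed.

Lemma wmulE p q dp dq : dle2 p 0 dp -> dle2 q 0 dq ->
  dle2 (wmul p q - S1 p q) 4 (dp + dq).
Proof.
move=> hp hq.
have -> : S1 p q = \sum_(m <- msupp p) p@_m *: S1 'X_[m] q.
  rewrite {1}[p]mpolyE (big_morph (S1^~ q) (fun p1 p2 => S1D p1 p2 q) (S10 q)).
  by apply: eq_bigr => m _; rewrite S1Z.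
rewrite /wmul -sumrB; apply: dle2_sum => m _.
case: (boolP (m \in msupp p)) => hm; last first.
  by rewrite mcoeff_msupp negbK in hm; rewrite (eqP hm) !scale0r subrr; apply: dle2_0.
rewrite -scalerBr; apply: dle2Z; apply: (dle2_mono _ (lmul_monoE (m:=m) hq)).
by have := hp m hm; lia.
Qed.


Definition PB (f z : W) : W :=
  \sum_(j < n) (mderiv (ry j) f * mderiv (lx j) z - mderiv (ry j) z * mderiv (lx j) f).

Lemma S1_PB f z : S1 f z - S1 z f = PB f z.
Proof. by rewrite /S1 /PB sumrB; ring. Qed.

Lemma wcomm_PB f z df dz : dle2 f 0 df -> dle2 z 0 dz ->
  dle2 (wcomm f z - PB f z) 4 (df + dz).
Proof.
move=> hf hz.
have -> : wcomm f z - PB f z = (wmul f z - S1 f z) - (wmul z f - S1 z f).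
  by rewrite -S1_PB /wcomm; ring.
apply: dle2B; first exact: wmulE.
by rewrite addnC; apply: wmulE.
Qed.

Lemma PB_dle f z df k dz : dle2 f 0 df -> dle2 z k dz ->
  dle2 (PB f z) (k + 2) (df + dz).
Proof.
move=> hf hz; apply: dle2_sum => j _; apply: dle2B.
  apply: (dle2_mono _ (dle2M (dle2_deriv hf) (dle2_deriv hz))); lia.
apply: (dle2_mono _ (dle2M (dle2_deriv hz) (dle2_deriv hf))); lia.
Qed.

Lemma PBD f u v : PB f (u + v) = PB f u + PB f v.
Proof. by rewrite /PB -big_split; apply: eq_bigr => j _ /=; rewrite !mderivD; ring. Qed.

Lemma PB0 f : PB f 0 = 0.
Proof. by rewrite /PB big1 // => j _; rewrite !mderiv0; ring. Qed.

Lemma PBZ f c u : PB f (c *: u) = c *: PB f u.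
Proof.
rewrite /PB scaler_sumr; apply: eq_bigr => j _; rewrite !mderivZ -!mul_mpolyC; ring.
Qed.

Lemma PBN f u : PB f (- u) = - PB f u.
Proof. by rewrite -scaleN1r PBZ scaleN1r. Qed.

Lemma PB_sum f (I : Type) (r : seq I) (P : pred I) (F : I -> W) :
  PB f (\sum_(i <- r | P i) F i) = \sum_(i <- r | P i) PB f (F i).
Proof. exact: (big_morph (PB f) (PBD f) (PB0 f)). Qed.

Lemma PBfD f1 f2 u : PB (f1 + f2) u = PB f1 u + PB f2 u.
Proof. by rewrite /PB -big_split; apply: eq_bigr => j _ /=; rewrite !mderivD; ring. Qed.

Lemma PBfZ c f u : PB (c *: f) u = c *: PB f u.
Proof.
rewrite /PB scaler_sumr; apply: eq_bigr => j _; rewrite !mderivZ -!mul_mpolyC; ring.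
Qed.

Lemma PBM f u v : PB f (u * v) = PB f u * v + u * PB f v.
Proof.
rewrite /PB mulr_suml mulr_sumr -big_split; apply: eq_bigr => j _ /=.
rewrite !mderivM; ring.
Qed.

End S.

Section S.
Variable n : nat.
Local Notation W := (weyl n).
Local Notation lx j := (lshift n j).
Local Notation ry j := (rshift n j).
Implicit Types a b : 'X_{1..n}.

Section Mono.
Variable t0 : 'X_{1..n}.
Local Notation mF := (mkgamma t0 t0).
Definition E (j : 'I_n) : 'X_{1..n+n} := (mF - U_(ry j) - U_(lx j))%MM.

Lemma coordE (P : 'I_(n+n) -> Prop) :
  (forall k, P (lx k)) -> (forall k, P (ry k)) -> forall i, P i.
Proof.
move=> hl hr i; case: (splitP i) => k hk.
  by have -> : i = lx k by apply: val_inj.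
by have -> : i = ry k by apply: val_inj.
Qed.

Lemma E_bal j k : E j (lx k) = E j (ry k).
Proof.
rewrite !mnmBE !mnm1E !eq_shift mkgL mkgR.
by case: (j == k) => /=; rewrite ?subn0.
Qed.

Lemma E_addl_test : True. Proof. by []. Qed.
Lemma E_addl (t : 'X_{1..n+n}) j : t0 j <> 0%N -> t (lx j) <> 0%N ->
  ((mF - U_(ry j)) + (t - U_(lx j)))%MM = (E j + t)%MM.
Proof.
move=> h1 h2; apply/mnmP; apply: coordE => k;
  rewrite !mnmDE !mnmBE !mnm1E !eq_shift ?mkgL ?mkgR;
  case: (eqVneq j k) => [<-|jk] /=; lia.
Qed.

Lemma E_addr (t : 'X_{1..n+n}) j : t0 j <> 0%N -> t (ry j) <> 0%N ->
  ((t - U_(ry j)) + (mF - U_(lx j)))%MM = (E j + t)%MM.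
Proof.
move=> h1 h2; apply/mnmP; apply: coordE => k;
  rewrite !mnmDE !mnmBE !mnm1E !eq_shift ?mkgL ?mkgR;
  case: (eqVneq j k) => [<-|jk] /=; lia.
Qed.

Lemma E_deg j : t0 j <> 0%N -> (mdeg (E j) + 2 = mdeg mF)%N.
Proof.
move=> h; have -> : mF = (E j + U_(ry j) + U_(lx j))%MM.
  apply/mnmP; apply: coordE => k;
  rewrite !mnmDE !mnmBE !mnm1E !eq_shift ?mkgL ?mkgR;
  case: (eqVneq j k) => [<-|jk] /=; lia.
by rewrite (mdegD (E j + U_(ry j))%MM) (mdegD (E j)) !mdeg1; lia.
Qed.

Lemma PBX (t : 'X_{1..n+n}) : PB 'X_[mF] 'X_[t] =
  \sum_(j < n) ((t0 j)%:R * ((t (lx j))%:R - (t (ry j))%:R)) *: 'X_[(E j + t)%MM].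
Proof.
rewrite /PB; apply: eq_bigr => j _; rewrite !mderivX mkgL mkgR.
have k1 : (t0 j)%:R *: 'X_[(mF - U_(ry j))%MM] * ((t (lx j))%:R *: 'X_[(t - U_(lx j))%MM])
    = ((t0 j)%:R * (t (lx j))%:R) *: ('X_[(E j + t)%MM] : W).
  rewrite -scalerAl -scalerAr scalerA -mpolyXD.
  have [->|h1] := eqVneq (t0 j) 0%N; first by rewrite !mul0r !scale0r.
  have [->|h2] := eqVneq (t (lx j)) 0%N; first by rewrite !mulr0 !scale0r.
  by rewrite E_addl; [by [] | exact/eqP | exact/eqP].
have k2 : (t (ry j))%:R *: 'X_[(t - U_(ry j))%MM] * ((t0 j)%:R *: 'X_[(mF - U_(lx j))%MM])
    = ((t0 j)%:R * (t (ry j))%:R) *: ('X_[(E j + t)%MM] : W).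
  rewrite -scalerAl -scalerAr scalerA -mpolyXD.
  have [->|h1] := eqVneq (t0 j) 0%N; first by rewrite !mulr0 !mul0r !scale0r.
  have [->|h2] := eqVneq (t (ry j)) 0%N; first by rewrite !mul0r !mulr0 !scale0r.
  by rewrite E_addr; [by rewrite mulrC | exact/eqP | exact/eqP].
by rewrite k1 k2 -scalerBl mulrBr.
Qed.

Lemma PB_bal (t : 'X_{1..n+n}) : (forall k, t (lx k) = t (ry k)) ->
  PB 'X_[mF] 'X_[t] = 0.
Proof.
move=> h; rewrite PBX big1 // => j _; by rewrite h subrr mulr0 scale0r.
Qed.

Definition Hc (a b : 'X_{1..n}) : W :=
  \sum_(j < n) ((t0 j)%:R * ((a j)%:R - (b j)%:R)) *: 'X_[E j].

Lemma PB_ab a b : PB 'X_[mF] 'X_[mkgamma a b] = Hc a b * 'X_[mkgamma a b].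
Proof.
rewrite PBX /Hc mulr_suml; apply: eq_bigr => j _.
by rewrite mkgL mkgR mpolyXD scalerAl.
Qed.

Lemma Hc_swap a b : Hc b a = - Hc a b.
Proof.
rewrite /Hc -sumrN; apply: eq_bigr => j _; rewrite -scaleNr; congr (_ *: _); ring.
Qed.

Lemma PB_Hc a b : PB 'X_[mF] (Hc a b) = 0.
Proof.
rewrite /Hc PB_sum big1 // => j _; rewrite PBZ PB_bal ?scaler0 //.
exact: E_bal.
Qed.

Lemma PB_Hcpow a b k : PB 'X_[mF] (Hc a b ^+ k) = 0.
Proof.
elim: k => [|k ih]; first by rewrite expr0 -mpolyX0 PB_bal // => j; rewrite !mnm0E.
by rewrite exprS PBM ih PB_Hc mul0r mulr0 addr0.
Qed.

End Mono.
End S.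

Section S.
Variable n : nat.
Local Notation W := (weyl n).
Local Notation lx j := (lshift n j).
Local Notation ry j := (rshift n j).
Implicit Types a b : 'X_{1..n}.
Section Mono.
Variable t0 : 'X_{1..n}.
Local Notation mF := (mkgamma t0 t0).
Local Notation E := (E t0).
Local Notation Hc := (Hc t0).

Lemma mcoeff_sum (I : Type) (r : seq I) (P : pred I) (F : I -> W) m :
  (\sum_(i <- r | P i) F i)@_m = \sum_(i <- r | P i) (F i)@_m.
Proof. exact: raddf_sum. Qed.

Lemma hom_Hc a b : hom (Hc a b) (mdeg mF - 2).
Proof.
apply: hom_sum => j _.
have [h|h] := eqVneq (t0 j) 0%N; first by rewrite h mul0r scale0r; exact: hom0.
have hj : t0 j <> 0%N by apply/eqP.
apply: homZ; have := E_deg hj.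
move=> e m; rewrite msuppX inE => /eqP ->; lia.
Qed.

Lemma Hc_neq0 a b k : t0 k <> 0%N -> a k <> b k -> Hc a b != 0.
Proof.
move=> h1 h2; apply/negP => /eqP h.
have := congr1 (mcoeff (E k)) h; rewrite mcoeff0 /Hc mcoeff_sum (bigD1 k) //=.
rewrite mcoeffZ mcoeffX eqxx mulr1 big1 ?addr0; last first.
  move=> j jk; rewrite mcoeffZ mcoeffX.
  have [->|hj] := eqVneq (t0 j) 0%N; first by rewrite mul0r mul0r.
  case: (eqVneq (E j) (E k)) => [e|]; last by rewrite mulr0.
  have := congr1 (fun m : 'X_{1..n+n} => m (lx j)) e => /=.
  have kj : (k == j) = false by rewrite eq_sym; exact: negbTE.
  rewrite !mnmBE !mnm1E !eq_shift eqxx kj mkgL.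
  move: hj => /eqP; lia.
apply/eqP; rewrite mulf_eq0 pnatr_eq0 subr_eq0 eqr_nat negb_or.
by apply/andP; split; apply/eqP.
Qed.

Definition Gs a b (c1 c2 : algC) k : W :=
  ((2%:R * 'i) ^+ k) *: (Hc a b ^+ k *
    (c2 *: 'X_[mkgamma a b] + ((-1) ^+ k * c1) *: 'X_[mkgamma b a])).

Lemma PB_G a b c1 c2 k :
  PB ('i *: ('X_[mF] + 'X_[mF])) (Gs a b c1 c2 k) = Gs a b c1 c2 k.+1.
Proof.
rewrite PBfZ PBfD /Gs PBZ PBM PB_Hcpow PBD !PBZ PB_ab PB_ab Hc_swap.
rewrite -!mul_mpolyC !rmorphM !rmorphXn /= !exprS.
ring.
Qed.


Lemma hom_pow (p : W) d k : hom p d -> hom (p ^+ k) (k * d).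
Proof.
move=> h; elim: k => [|k ih].
  rewrite expr0 -mpolyX0 mul0n => m; rewrite msuppX inE => /eqP ->; exact: mdeg0.
by rewrite exprS mulSn; apply: homM.
Qed.

Lemma hom_G a b c1 c2 k :
  hom (Gs a b c1 c2 k) (k * (mdeg mF - 2) + (mdeg a + mdeg b)).
Proof.
apply: homZ; apply: homM; first exact/hom_pow/hom_Hc.
apply: homD; apply: homZ.
  by have := homX (m:=mkgamma a b); rewrite mdeg_mkg.
by have := homX (m:=mkgamma b a); rewrite mdeg_mkg addnC.
Qed.

Lemma Gs_neq0 a b c1 c2 k : Hc a b != 0 -> c2 != 0 ->
  mkgamma a b != mkgamma b a -> Gs a b c1 c2 k != 0.
Proof.
move=> hH hc hab; rewrite /Gs -mul_mpolyC mulf_neq0 //.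
  by rewrite mpolyC_eq0 expf_neq0 // mulf_neq0 // ?pnatr_eq0 ?neq0Ci.
rewrite mulf_neq0 ?expf_neq0 //.
apply/negP => /eqP /(congr1 (mcoeff (mkgamma a b))).
rewrite mcoeff0 mcoeffD !mcoeffZ !mcoeffX eqxx eq_sym (negbTE hab) mulr0 addr0 mulr1.
by apply/eqP.
Qed.
End Mono.

Lemma top_lemma (G L : W) d : G != 0 -> hom G d -> dle2 L 1 d ->
  (G + L != 0) /\ wdeg (G + L) = d.
Proof.
move=> hG hh hL.
have [m hm] : exists m, m \in msupp G.
  case e: (msupp G) => [|m s].
    by move/eqP: e; rewrite msupp_eq0 (negbTE hG).
  by exists m; rewrite inE eqxx.
have dm := hh m hm.
have hLm : L@_m = 0.
  by apply/eqP; rewrite mcoeff_eq0; apply/negP => /hL; lia.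
have hz : (G + L)@_m != 0 by rewrite mcoeffD hLm addr0 -mcoeff_msupp.
have hzm : m \in msupp (G + L) by rewrite mcoeff_msupp.
split; first by apply: contraNneq hz => ->; rewrite mcoeff0.
have lo := msize_mdeg_lt hzm.
have up : (msize (G + L) <= d.+1)%N.
  rewrite msizeE; apply/bigmax_leqP_seq => m' hm' _.
  move/msuppD_le: hm'; rewrite mem_cat => /orP [/hh -> //|/hL]; lia.
rewrite /wdeg; lia.
Qed.

End S.

Theorem theorem6 (n : nat) (hn : (0 < n)%N) (a b at_ : 'X_{1..n}) (s : sign)
  (hab : lex_le b a)
  (hminus : s = SMinus -> lex_lt b a)
  (hk : exists k : 'I_n, a k <> b k /\ at_ k <> 0%N) :
  forall l : nat,
    zchain s a b at_ l != 0 /\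
    wdeg (zchain s a b at_ l) = (2 * l * (mdeg at_ - 1) + mdeg a + mdeg b)%N.
Proof.
have [k0 [hk1 hk2]] := hk.
pose F : weyl n := 'X_[mkgamma at_ at_].
pose f := gsig SPlus at_ at_.
have hf : f = 'i *: (F + F) by rewrite /f /gsig daggerX.
have [c1 [c2 [hc2 hz0]]] : exists c1 c2 : algC, c2 != 0 /\
    gsig s a b = Gs at_ a b c1 c2 0.
  case: s {hminus} => /=.
    exists 'i, 'i; split; first exact: neq0Ci.
    by rewrite /Gs !expr0 scale1r !mul1r daggerX /amono scalerDr addrC.
  exists 1, (-1); split; first by rewrite oppr_eq0 oner_eq0.
  by rewrite /Gs !expr0 scale1r !mul1r daggerX /amono scaleN1r scale1r addrC.
set D := mdeg (mkgamma at_ at_).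
have hD : D = (mdeg at_ + mdeg at_)%N by rewrite /D mdeg_mkg.
have hat : (1 <= mdeg at_)%N.
  rewrite mdegE (bigD1 k0) //=; move: hk2; lia.
have hfD : dle2 f 0 D by rewrite hf; apply/dle2Z/dle2D; apply: dle2X.
have inv : forall l, exists L, zchain s a b at_ l = Gs at_ a b c1 c2 l + L /\
    dle2 L 1 (l * (D - 2) + (mdeg a + mdeg b)).
  elim => [|l [L [hz hL]]].
    by exists 0; rewrite addr0 -hz0; split => //; apply: dle2_0.
  set z := zchain s a b at_ l.
  exists (PB f L + (wcomm f z - PB f z)); split.
    have e1 : PB f z = Gs at_ a b c1 c2 l.+1 + PB f L.
      by rewrite /z hz PBD hf PB_G.
    change (zchain s a b at_ l.+1) with (wcomm f z).
    rewrite addrA -e1; ring.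
  have hzD : dle2 z 0 (l * (D - 2) + (mdeg a + mdeg b)).
    rewrite /z hz; apply: dle2D; first exact/hom_dle/hom_G.
    by apply: (dle2_mono _ hL); lia.
  rewrite mulSn; apply: dle2D.
    by apply: (dle2_mono _ (PB_dle hfD hL)); rewrite hD; lia.
  by apply: (dle2_mono _ (wcomm_PB hfD hzD)); rewrite hD; lia.
move=> l; have [L [hz hL]] := inv l; rewrite hz.
have hab' : mkgamma a b != mkgamma b a.
  apply/negP => /eqP /(congr1 (fun m : 'X_{1..n+n} => m (lshift n k0))).
  by rewrite /= !mkgL.
have [h1 h2] := top_lemma (@Gs_neq0 n at_ a b c1 c2 l (Hc_neq0 hk2 hk1) hc2 hab') (@hom_G n at_ a b c1 c2 l) hL.
split => //; rewrite h2 mdeg_mkg; nia.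
Qed.
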